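(* Let $\mathcal{M}\subseteq\mathbb{S}^n$ be finite. If $\mathcal{T}(\mathcal{M}')$ is rank-one generated for every $\mathcal{M}'\subseteq\mathcal{M}$, then $\mathcal{S}(\mathcal{M})$ is rank-one generated.
   Context: $\mathbb{S}^n$ denotes real symmetric $n\times n$ matrices with $\langle A,B\rangle=\mathrm{tr}(AB)$, $\mathbb{S}^n_+$ the PSD cone. For $\mathcal{M}\subseteq\mathbb{S}^n$, $\mathcal{S}(\mathcal{M})=\{X\in\mathbb{S}^n_+:\langle M,X\rangle\ge0\ \forall M\in\mathcal{M}\}$ and $\mathcal{T}(\mathcal{M})=\{X\in\mathbb{S}^n_+:\langle M,X\rangle=0\ \forall M\in\mathcal{M}\}$ (so $\mathcal{T}(\emptyset)=\mathbb{S}^n_+$). A closed convex cone $\mathcal{S}\subseteq\mathbb{S}^n_+$ is rank-one generated (ROG) if $\mathcal{S}=\mathrm{conv}(\mathcal{S}\cap\{xx^\top:x\in\mathbb{R}^n\})$. *)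

(* Defs.v *)
From HB Require Import structures.
From mathcomp Require Import all_boot all_order all_algebra.
From mathcomp Require Import reals.
Set Implicit Arguments. Unset Strict Implicit. Unset Printing Implicit Defensive.
Import Order.TTheory GRing.Theory Num.Theory.
Local Open Scope ring_scope.

Section Defs.
Variables (R : realType) (n : nat).

Definition symm (X : 'M[R]_n) : Prop := X^T = X.

Definition psd (X : 'M[R]_n) : Prop :=
  symm X /\ forall x : 'cV[R]_n, 0 <= (x^T *m X *m x) ord0 ord0.

Definition inner (A B : 'M[R]_n) : R := \tr (A *m B).

Definition Scone (M : 'M[R]_n -> Prop) (X : 'M[R]_n) : Prop :=
  psd X /\ forall A, M A -> 0 <= inner A X.
Definition Tcone (M : 'M[R]_n -> Prop) (X : 'M[R]_n) : Prop :=
  psd X /\ forall A, M A -> inner A X = 0.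

Definition rank_one (Y : 'M[R]_n) : Prop := exists x : 'cV[R]_n, Y = x *m x^T.

Definition conv (P : 'M[R]_n -> Prop) (X : 'M[R]_n) : Prop :=
  exists (k : nat) (lam : 'I_k -> R) (Y : 'I_k -> 'M[R]_n),
    [/\ forall i, 0 <= lam i, \sum_(i < k) lam i = 1,
        forall i, P (Y i) & X = \sum_(i < k) lam i *: Y i].

Definition ROG (S : 'M[R]_n -> Prop) : Prop :=
  forall X, S X <-> conv (fun Y => S Y /\ rank_one Y) X.

End Defs.

(* Main.v *)
Require Import Defs.
From HB Require Import structures.
From mathcomp Require Import all_boot all_order all_algebra.
From mathcomp Require Import reals.
From mathcomp Require Import ring lra.
Import Order.TTheory GRing.Theory Num.Theory.
Local Open Scope ring_scope.

Section Aux.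
Variables (R : realType) (n : nat).
Implicit Types (X Y A : 'M[R]_n).

Lemma innerD A X Y : inner A (X + Y) = inner A X + inner A Y.
Proof. by rewrite /inner mulmxDr mxtraceD. Qed.

Lemma innerZ A a X : inner A (a *: X) = a * inner A X.
Proof. by rewrite /inner -scalemxAr mxtraceZ. Qed.

Lemma innerN A X : inner A (- X) = - inner A X.
Proof. by rewrite -scaleN1r innerZ mulN1r. Qed.

Lemma inner0 A : inner A 0 = 0.
Proof. by rewrite /inner mulmx0 mxtrace0. Qed.

Lemma inner_sum A k (F : 'I_k -> 'M[R]_n) :
  inner A (\sum_(i < k) F i) = \sum_(i < k) inner A (F i).
Proof.
elim/big_rec2: _ => [|i y1 y2 _ <-]; first by rewrite inner0.
by rewrite innerD.
Qed.

Lemma psd0 : psd (0 : 'M[R]_n).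
Proof.
split; first by rewrite /symm trmx0.
by move=> x; rewrite mulmx0 mul0mx mxE.
Qed.

Lemma psdD X Y : psd X -> psd Y -> psd (X + Y).
Proof.
move=> [sX pX] [sY pY]; split.
  by rewrite /symm linearD /= sX sY.
by move=> x; rewrite mulmxDr mulmxDl mxE addr_ge0.
Qed.

Lemma psdZ a X : 0 <= a -> psd X -> psd (a *: X).
Proof.
move=> ha [sX pX]; split.
  by rewrite /symm linearZ /= sX.
by move=> x; rewrite -scalemxAr -scalemxAl mxE mulr_ge0.
Qed.

Lemma psd_sum k (lam : 'I_k -> R) (F : 'I_k -> 'M[R]_n) :
  (forall i, 0 <= lam i) -> (forall i, psd (F i)) ->
  psd (\sum_(i < k) lam i *: F i).
Proof.
move=> hl hF; elim/big_rec: _ => [|i y _ hy]; first exact: psd0.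
by apply: psdD => //; apply: psdZ.
Qed.

Lemma count_le_in (T : eqType) (s : seq T) (p q : pred T) :
  {in s, forall x, p x -> q x} -> (count p s <= count q s)%N.
Proof.
elim: s => [|y s IH] hpq //=.
have := hpq y; rewrite in_cons eqxx => /(_ isT) hy.
apply: leq_add; first by case: (p y) hy => //= ->.
by apply: IH => z zs; apply: hpq; rewrite in_cons zs orbT.
Qed.

Lemma count_lt_in (T : eqType) (s : seq T) (p q : pred T) :
  {in s, forall x, p x -> q x} -> (exists2 x, x \in s & q x && ~~ p x) ->
  (count p s < count q s)%N.
Proof.
elim: s => [|y s IH] hpq [x]; first by rewrite in_nil.
rewrite in_cons /= => /orP [/eqP -> /andP [qy npy]|xs hx].
  rewrite qy (negbTE npy) add0n add1n ltnS.
  apply: count_le_in => z zs; apply: hpq; by rewrite in_cons zs orbT.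
have := hpq y; rewrite in_cons eqxx => /(_ isT) hy.
rewrite -addnS; apply: leq_add.
  by case: (p y) hy => //= ->.
apply: IH; last by exists x.
by move=> z zs; apply: hpq; rewrite in_cons zs orbT.
Qed.

Lemma step_real (s : seq (R * R)) :
  (forall p, p \in s -> p.2 < 0 -> 0 < p.1) ->
  (exists2 p, p \in s & p.2 < 0) ->
  exists t : R, [/\ 0 < t, (forall p, p \in s -> p.2 < 0 -> t <= p.1 / - p.2) &
    exists2 p, p \in s & p.2 < 0 /\ t = p.1 / - p.2].
Proof.
elim: s => [|p s IH] hpos [q]; first by rewrite in_nil.
have hpos' : forall r, r \in s -> r.2 < 0 -> 0 < r.1.
  by move=> r rs; apply: hpos; rewrite in_cons rs orbT.
have pp : p \in p :: s by rewrite in_cons eqxx.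
have ratio_pos : forall r, r \in p :: s -> r.2 < 0 -> 0 < r.1 / - r.2.
  by move=> r rs hr; rewrite divr_gt0 // ?oppr_gt0 // hpos.
case: (boolP (has (fun r => r.2 < 0) s)) => [/hasP [q' q's q'neg] | hn].
  have [t' [t'pos t'le [r rs [rneg rt]]]] := IH hpos' (ex_intro2 _ _ q' q's q'neg).
  subst t'.
  have rps : r \in p :: s by rewrite in_cons rs orbT.
  case: (ltP p.2 0) => hp.
    exists (Num.min (r.1 / - r.2) (p.1 / - p.2)); split.
    - by rewrite lt_min ratio_pos //= ratio_pos.
    - move=> z; rewrite in_cons => /orP [/eqP -> _|zs hz].
        by rewrite ge_min lexx orbT.
      by rewrite ge_min t'le.
    - case: (leP (r.1 / - r.2) (p.1 / - p.2)) => hh.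
        by exists r.
      by exists p.
  exists (r.1 / - r.2); split => //.
  - move=> z; rewrite in_cons => /orP [/eqP -> |zs hz]; first by rewrite ltNge hp.
    exact: t'le.
  - by exists r.
move=> hqin hq.
have hp : p.2 < 0.
  move: (hasPn hn) => hn'.
  move: hqin; rewrite in_cons => /orP [/eqP <- //|qs].
  by move: (hn' q qs); rewrite hq.
exists (p.1 / - p.2); split.
- exact: ratio_pos.
- move=> z; rewrite in_cons => /orP [/eqP -> //|zs hz].
  by move: (hasPn hn z zs); rewrite hz.
- by exists p.
Qed.

Lemma step_ge0 (c d t : R) : 0 <= c -> 0 < t -> (d < 0 -> t <= c / - d) ->
  0 <= c + t * d.
Proof.
move=> hc ht h; case: (ltP d 0) => hd.
  have := h hd; rewrite ler_pdivlMr ?oppr_gt0 // => hh.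
  lra.
by rewrite addr_ge0 // mulr_ge0 // ltW.
Qed.

End Aux.

Section Main.
Variables (R : realType) (n : nat) (M : seq 'M[R]_n).

Definition SM := Scone (fun A : 'M[R]_n => A \in M).

Definition cone (X : 'M[R]_n) := exists s : seq (R * 'M[R]_n),
  (forall p, p \in s -> 0 <= p.1 /\ SM p.2 /\ rank_one p.2) /\
  X = \sum_(p <- s) p.1 *: p.2.

Definition cnt (X : 'M[R]_n) := count (fun A => 0 < inner A X) M.

Lemma cone0 : cone 0.
Proof. by exists [::]; split => //; rewrite big_nil. Qed.

Lemma cone_add X Y : cone X -> cone Y -> cone (X + Y).
Proof.
move=> [s1 [h1 ->]] [s2 [h2 ->]]; exists (s1 ++ s2); split.
  by move=> p; rewrite mem_cat => /orP [/h1|/h2].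
by rewrite big_cat.
Qed.

Lemma cone_scale a X : 0 <= a -> cone X -> cone (a *: X).
Proof.
move=> ha [s [h ->]]; exists (map (fun p => (a * p.1, p.2)) s); split.
  move=> p /mapP [q qs ->] /=; have [h1 h2] := h q qs.
  by split => //; rewrite mulr_ge0.
rewrite big_map scaler_sumr; apply: eq_bigr => p _.
by rewrite scalerA.
Qed.

Lemma cone_r1 Z : SM Z -> rank_one Z -> cone Z.
Proof.
move=> h1 h2; exists [:: (1, Z)]; split.
  by move=> p; rewrite in_cons in_nil orbF => /eqP -> /=.
by rewrite big_seq1 scale1r.
Qed.

Lemma SM0 : SM 0.
Proof. by split; [exact: psd0 | move=> A _; rewrite inner0]. Qed.

Lemma SM_conic k (lam : 'I_k -> R) (Y : 'I_k -> 'M[R]_n) :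
  (forall i, 0 <= lam i) -> (forall i, SM (Y i)) -> SM (\sum_(i < k) lam i *: Y i).
Proof.
move=> hl hY; split.
  by apply: psd_sum => // i; case: (hY i).
move=> A hA; rewrite inner_sum; apply: sumr_ge0 => i _.
by rewrite innerZ mulr_ge0 //; case: (hY i) => _; apply.
Qed.

Lemma cone_conv X : cone X -> conv (fun Y => SM Y /\ rank_one Y) X.
Proof.
move=> [s [hs ->]].
pose x0 := ((0 : R), (0 : 'M[R]_n)).
have hnth : forall i : 'I_(size s), nth x0 s i \in s by move=> i; apply: mem_nth.
have -> : \sum_(p <- s) p.1 *: p.2 = \sum_(i < size s) (nth x0 s i).1 *: (nth x0 s i).2.
  by rewrite (big_nth x0) big_mkord.
set C := \sum_(i < size s) (nth x0 s i).1.
have hC : 0 <= C by apply: sumr_ge0 => i _; case: (hs _ (hnth i)).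
case: (eqVneq C 0) => hC0.
  have h0 : forall i : 'I_(size s), (nth x0 s i).1 = 0.
    by move=> i; apply: (psumr_eq0P _ hC0) => // j _; case: (hs _ (hnth j)).
  exists 1%N, (fun _ => 1), (fun _ => 0); split => //.
  - by rewrite big_ord1.
  - move=> _; split; first exact: SM0.
    by exists 0; rewrite mul0mx.
  - rewrite big_ord1 scaler0 big1 // => i _.
    by rewrite h0 scale0r.
have Cpos : 0 < C by rewrite lt_def hC0 hC.
exists (size s), (fun i => (nth x0 s i).1 / C), (fun i => C *: (nth x0 s i).2); split.
- by move=> i; rewrite divr_ge0 //; case: (hs _ (hnth i)).
- by rewrite -mulr_suml divff.
- move=> i; have [h1 [[h2 h3] [x hx]]] := hs _ (hnth i); split.
    split; first exact: psdZ.
    by move=> A hA; rewrite innerZ mulr_ge0 // h3.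
  exists (Num.sqrt C *: x); rewrite hx linearZ /= -scalemxAl -scalemxAr scalerA.
  by rewrite -expr2 sqr_sqrtr.
- apply: eq_bigr => i _; rewrite scalerA mulfVK //.
Qed.

Lemma conv_SM X : conv (fun Y => SM Y /\ rank_one Y) X -> SM X.
Proof.
move=> [k [lam [Y [hl _ hY ->]]]].
by apply: SM_conic => // i; case: (hY i).
Qed.

Lemma move_pt X D : SM X ->
  (forall A, A \in M -> inner A X = 0 -> inner A D = 0) ->
  (exists2 A, A \in M & inner A D < 0) ->
  exists t, [/\ 0 < t, (forall A, A \in M -> 0 <= inner A (X + t *: D)) ,
    (forall A, A \in M -> inner A D < 0 -> t <= inner A X / - inner A D) &
    (cnt (X + t *: D) < cnt X)%N].
Proof.
move=> [pX hX] hD [A0 A0M A0neg].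
pose f := fun A : 'M[R]_n => (inner A X, inner A D).
have hpos : forall p, p \in map f M -> p.2 < 0 -> 0 < p.1.
  move=> p /mapP [A AM ->] /= hA; rewrite lt_def hX // andbT.
  apply/eqP => h0; by move: hA; rewrite hD // ltxx.
have [t [tpos tle [p /mapP [B BM ->] [/= Bneg Bt]]]] :=
  @step_real _ _ hpos (ex_intro2 _ _ (f A0) (map_f f A0M) A0neg).
have tle' : forall A, A \in M -> inner A D < 0 -> t <= inner A X / - inner A D.
  by move=> A AM; apply: (tle (f A)); apply: map_f.
have hX' : forall A, A \in M -> 0 <= inner A (X + t *: D).
  move=> A AM; rewrite innerD innerZ; apply: step_ge0 => //; [exact: hX | exact: tle'].
exists t; split => //.
- apply: count_lt_in.
    move=> A AM /=; rewrite innerD innerZ => h; rewrite lt_def hX // andbT.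
    apply/eqP => h0; by move: h; rewrite h0 hD // mulr0 addr0 ltxx.
  exists B => //; apply/andP; split.
    by have := hpos (f B) (map_f f BM) Bneg.
  have hD0 : inner B D != 0 by rewrite lt_eqF.
  rewrite innerD innerZ Bt.
  have -> : inner B X + inner B X / - inner B D * inner B D = 0.
    by field.
  by rewrite ltxx.
Qed.

Lemma inner_step m : forall (X : 'M[R]_n) (lam : 'I_m -> R) (Y : 'I_m -> 'M[R]_n),
  (forall Z, SM Z -> (cnt Z < cnt X)%N -> cone Z) -> SM X ->
  (forall i, 0 <= lam i) ->
  (forall i, [/\ psd (Y i), rank_one (Y i) &
     forall A, A \in M -> inner A X = 0 -> inner A (Y i) = 0]) ->
  X = \sum_(i < m) lam i *: Y i -> cone X.
Proof.
elim: m => [|m IHm] X lam Y IHo SX hl hY.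
  by move=> ->; rewrite big_ord0; exact: cone0.
rewrite big_ord_recr /=.
set W := \sum_(i < m) _.
set l := lam ord_max; set y := Y ord_max => hXe.
have [pX hX] : psd X /\ (forall A, A \in M -> 0 <= inner A X) := SX.
have hl0 : 0 <= l by exact: hl.
have [ypsd yr1 yact] := hY ord_max.
have Wpsd : psd W.
  by apply: psd_sum => // i; case: (hY (widen_ord (leqnSn m) i)).
have Wact : forall A, A \in M -> inner A X = 0 -> inner A W = 0.
  move=> A AM h0; rewrite inner_sum big1 // => i _.
  by rewrite innerZ; case: (hY (widen_ord (leqnSn m) i)) => _ _ /(_ A AM h0) ->; rewrite mulr0.
have inact : forall Z, (forall A, A \in M -> inner A X = 0 -> inner A Z = 0) ->
    {in M, forall A, 0 < inner A Z -> 0 < inner A X}.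
  move=> Z hZ A AM h; rewrite lt_def hX // andbT; apply/eqP => h0.
  by move: h; rewrite hZ // ltxx.
have hW : SM W -> cone W.
  move=> SW.
  have hle : (cnt W <= cnt X)%N by apply: count_le_in; exact: (inact W Wact).
  case: (ltngtP (cnt W) (cnt X)) => [hlt|hgt|heq]; first exact: IHo.
    by move: hle; rewrite leqNgt hgt.
  apply: (IHm W (fun i => lam (widen_ord (leqnSn m) i))
                (fun i => Y (widen_ord (leqnSn m) i))) => //.
  - by move=> Z SZ; rewrite heq; apply: IHo.
  - move=> i; have [h1 h2 h3] := hY (widen_ord (leqnSn m) i); split => // A AM h0.
    apply: h3 => //.
    case: (eqVneq (inner A X) 0) => // hne.
    have hXp : 0 < inner A X by rewrite lt_def hne hX.
    have : (cnt W < cnt X)%N.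
      apply: count_lt_in; first exact: (inact W Wact).
      by exists A => //; rewrite hXp h0 ltxx.
    by rewrite heq ltnn.
case: (eqVneq l 0) => hl0'.
  have -> : X = W by rewrite hXe hl0' scale0r addr0.
  by apply: hW; rewrite -[W]addr0 -(scale0r y) -hl0' -hXe.
have lpos : 0 < l by rewrite lt_def hl0' hl0.
have [tL [tLpos tLle coneL]] : exists tL, [/\ 0 < tL, tL <= l & cone (X - tL *: y)].
  case: (boolP (has (fun A => inner A W < 0) M)) => [/hasP [A0 A0M A0neg] | hn].
    have yact' : forall A, A \in M -> inner A X = 0 -> inner A (- y) = 0.
      by move=> A AM h; rewrite innerN yact // oppr0.
    have hXA0 := hX A0 A0M.
    have hXA0' : inner A0 X = inner A0 W + l * inner A0 y by rewrite hXe innerD innerZ.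
    have A0y : 0 < inner A0 y.
      rewrite -(pmulr_rgt0 _ lpos); lra.
    have A0y' : inner A0 (- y) < 0 by rewrite innerN oppr_lt0.
    have [t [tpos tge tle tcnt]] := move_pt X (- y) SX yact' (ex_intro2 _ _ A0 A0M A0y').
    have tl : t < l.
      have := tle A0 A0M A0y'; rewrite innerN opprK => h.
      apply: (le_lt_trans h); rewrite ltr_pdivrMr //; lra.
    exists t; split => //; first exact: ltW.
    move: tge tcnt; rewrite scalerN => tge tcnt.
    apply: IHo => //; split => //.
    have -> : X - t *: y = W + (l - t) *: y by rewrite hXe scalerBl addrA.
    by apply: psdD => //; apply: psdZ => //; rewrite subr_ge0 ltW.
  exists l; split => //.
  have -> : X - l *: y = W by rewrite hXe addrK.
  apply: hW; split => // A AM; move: (hasPn hn A AM); by rewrite -leNgt.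
case: (boolP (has (fun A => inner A y < 0) M)) => [/hasP [A0 A0M A0neg] | hn].
  have [t [tpos tge tle tcnt]] := move_pt X y SX yact (ex_intro2 _ _ A0 A0M A0neg).
  have coneR : cone (X + t *: y).
    apply: IHo => //; split => //; apply: psdD => //; exact: psdZ (ltW tpos) ypsd.
  have hs : tL + t != 0 by rewrite lt0r_neq0 // addr_gt0.
  set a := t / (tL + t); set b := tL / (tL + t).
  have hab : a + b = 1 by rewrite /a /b -mulrDl addrC divff.
  have hab2 : a * tL = b * t by rewrite /a /b; field.
  have -> : X = a *: (X - tL *: y) + b *: (X + t *: y).
    rewrite scalerBr scalerDr !scalerA.
    by rewrite addrACA -scalerDl hab scale1r hab2 addNr addr0.
  have hpos : 0 < tL + t by rewrite addr_gt0.
  have ha : 0 <= a by rewrite /a divr_ge0 // ltW.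
  have hb : 0 <= b by rewrite /b divr_ge0 // ltW.
  by apply: cone_add; apply: cone_scale.
have Sy : SM y by split => // A AM; move: (hasPn hn A AM); rewrite -leNgt.
have -> : X = (X - tL *: y) + tL *: y by rewrite subrK.
by apply: cone_add => //; apply: cone_scale; [exact: ltW | exact: cone_r1].
Qed.

Lemma main_cone
  (hR : forall M' : 'M[R]_n -> Prop, (forall A, M' A -> A \in M) -> ROG (Tcone M'))
  k : forall X, SM X -> (cnt X < k)%N -> cone X.
Proof.
elim: k => [|k IHk] X SX hk //.
have [pX hX] : psd X /\ (forall A, A \in M -> 0 <= inner A X) := SX.
pose M' := fun A => A \in M /\ inner A X = 0.
have hT : Tcone M' X by split => // A [].
have [k' [lam [Y [hl _ hY hXe]]]] := (hR M' (fun A h => proj1 h) X).1 hT.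
apply: (inner_step k' X lam Y) => //.
- move=> Z SZ hZ; apply: IHk => //; exact: leq_trans hZ hk.
- move=> i; have [[pY hY0] r1] := hY i; split => // A AM h0; apply: hY0; by split.
Qed.

End Main.

Theorem lemma2p15 (R : realType) (n : nat) (M : seq 'M[R]_n) :
  (forall A, A \in M -> symm A) ->
  (forall M' : 'M[R]_n -> Prop,
      (forall A, M' A -> A \in M) -> ROG (Tcone M')) ->
  ROG (Scone (fun A => A \in M)).
Proof.
move=> _ hR X; split.
  move=> SX; apply: (@cone_conv R n M).
  by apply: (@main_cone R n M hR (cnt R n M X).+1).
exact: (@conv_SM R n M).
Qed.
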